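(* Let $P,Q\in\Gamma_n$ and $0<r\le R$ with $r\le p_i/q_i\le R$ for all $i$. Let $s,t\in\mathbb{R}$ with $2\le s\le4$ and $2\le t\le4$. Then $$\frac{1}{R^{s+1}}\Big(\frac{R+1}{2}\Big)^{s-t}\frac{(4-s)R+s}{tR+4-t}\,\zeta_t(P\|Q)\le\zeta_s(Q\|P)\le\frac{1}{r^{s+1}}\Big(\frac{r+1}{2}\Big)^{s-t}\frac{(4-s)r+s}{tr+4-t}\,\zeta_t(P\|Q).$$
   Context: $\Gamma_n=\{P=(p_1,\dots,p_n): p_i>0,\ \sum_i p_i=1\}$, $n\ge2$. For $P,Q\in\Gamma_n$ and $s\in\mathbb{R}$: $\zeta_s(P\|Q)=(s-1)^{-1}\sum_i(p_i-q_i)\big(\frac{p_i+q_i}{2q_i}\big)^{s-1}$ for $s\ne1$; $\zeta_1(P\|Q)=\sum_i(p_i-q_i)\ln\frac{p_i+q_i}{2q_i}$. $\zeta_s(Q\|P)$ is obtained by interchanging $p_i$ and $q_i$. *)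

(* Defs.v *)
From Stdlib Require Import Reals Lra.
Open Scope R_scope.

Fixpoint fsum (n : nat) (f : nat -> R) : R :=
  match n with
  | O => 0
  | S m => fsum m f + f m
  end.

Definition Gamma (n : nat) (p : nat -> R) : Prop :=
  (forall i, (i < n)%nat -> 0 < p i) /\ fsum n p = 1.

Definition zeta (n : nat) (s : R) (p q : nat -> R) : R :=
  match Req_EM_T s 1 with
  | left _ => fsum n (fun i => (p i - q i) * ln ((p i + q i) / (2 * q i)))
  | right _ => / (s - 1) *
      fsum n (fun i => (p i - q i) * Rpower ((p i + q i) / (2 * q i)) (s - 1))
  end.

(* Main.v *)
Require Import Defs.
From Stdlib Require Import Reals.
From Coquelicot Require Import Coquelicot.
From Stdlib Require Import Lra.
Open Scope R_scope.
Lemma dpow u du c x : 0 < u x -> is_derive u x du ->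
  is_derive (fun y => Rpower (u y) c) x (c * Rpower (u x) (c-1) * du).
Proof.
intros H1 H2.
replace (c * Rpower (u x) (c-1) * du) with (scal du (c * Rpower (u x) (c-1))).
2:{ unfold scal; simpl; unfold mult; simpl; ring. }
apply (is_derive_comp (fun y => Rpower y c) u). 2: exact H2.
apply is_derive_Reals. apply derivable_pt_lim_power. exact H1.
Qed.
Lemma dmul f g df dg x : is_derive f x df -> is_derive g x dg ->
  is_derive (fun y => f y * g y) x (df * g x + f x * dg).
Proof.
intros H1 H2. pose proof (is_derive_mult f g x df dg H1 H2 Rmult_comm) as H.
exact H.
Qed.
Lemma rp_split z c : 0 < z -> Rpower z c = Rpower z (c-1) * z.
Proof. intros Hz. rewrite <- (Rpower_1 z) at 3 by exact Hz. rewrite <- Rpower_plus. f_equal; ring. Qed.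

Ltac sc := repeat split; try exact I; try lra; try (intro; lra); try (intro; nra).
Ltac ad := auto_derive; [ sc | try (field; sc) ].

Definition P x := (x+1)/2.
Definition Qf x := (1+x)/(2*x).
Definition gfun t x := (x-1)/(t-1) * Rpower (P x) (t-1).
Definition g1 t x := Rpower (P x) (t-2) * ((x+1)/(2*(t-1)) + (x-1)/2).
Definition g2 t x := Rpower (P x) (t-3) * ((t*x+4-t)/4).
Definition ffun s x := (1-x)/(s-1) * Rpower (Qf x) (s-1).
Definition f1 s x := Rpower (Qf x) (s-2) * (-(Qf x)/(s-1) - (1-x)/(2*x^2)).
Definition f2 s x := Rpower (Qf x) (s-3) * (((4-s)*x+s)/(4*x^4)).

Lemma P_pos x : 0 < x -> 0 < P x. Proof. unfold P; intros; lra. Qed.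
Lemma Qf_pos x : 0 < x -> 0 < Qf x.
Proof. unfold Qf; intros. apply Rdiv_lt_0_compat; lra. Qed.

Lemma dP x : is_derive P x (1/2).
Proof. unfold P. ad. Qed.
Lemma dQf x : 0 < x -> is_derive Qf x (-1/(2*x^2)).
Proof. intros. unfold Qf. ad. Qed.

Lemma dg t x : t <> 1 -> 0 < x -> is_derive (gfun t) x (g1 t x).
Proof.
intros Ht Hx. unfold gfun, g1.
assert (H : is_derive (fun y => (y-1)/(t-1)) x (1/(t-1))).
{ ad. }
pose proof (dmul _ _ _ _ x H (dpow P _ (t-1) x (P_pos x Hx) (dP x))) as D.
replace (Rpower (P x) (t - 2) * ((x + 1) / (2 * (t - 1)) + (x - 1) / 2))
  with (1 / (t - 1) * Rpower (P x) (t - 1) + (x - 1) / (t - 1) * ((t - 1) * Rpower (P x) (t - 1 - 1) * (1 / 2))).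
exact D.
rewrite (rp_split (P x) (t-1)) by (apply P_pos; exact Hx).
replace (t-1-1) with (t-2) by ring. unfold P. field. intro; lra.
Qed.

Lemma dg1 t x : t <> 1 -> 0 < x -> is_derive (g1 t) x (g2 t x).
Proof.
intros Ht Hx. unfold g1, g2.
assert (H : is_derive (fun y => (y+1)/(2*(t-1)) + (y-1)/2) x (1/(2*(t-1)) + 1/2)).
{ ad. }
pose proof (dmul _ _ _ _ x (dpow P _ (t-2) x (P_pos x Hx) (dP x)) H) as D.
replace (Rpower (P x) (t - 3) * ((t * x + 4 - t) / 4)) with
  ((t - 2) * Rpower (P x) (t - 2 - 1) * (1 / 2) * ((x + 1) / (2 * (t - 1)) + (x - 1) / 2) +
       Rpower (P x) (t - 2) * (1 / (2 * (t - 1)) + 1 / 2)).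
exact D.
rewrite (rp_split (P x) (t-2)) by (apply P_pos; exact Hx).
replace (t-2-1) with (t-3) by ring. unfold P. field. intro; lra.
Qed.

Lemma df s x : s <> 1 -> 0 < x -> is_derive (ffun s) x (f1 s x).
Proof.
intros Ht Hx. unfold ffun, f1.
assert (H : is_derive (fun y => (1-y)/(s-1)) x (-1/(s-1))).
{ ad. }
pose proof (dmul _ _ _ _ x H (dpow Qf _ (s-1) x (Qf_pos x Hx) (dQf x Hx))) as D.
replace (Rpower (Qf x) (s - 2) * (- Qf x / (s - 1) - (1 - x) / (2 * x ^ 2)))
  with (-1 / (s - 1) * Rpower (Qf x) (s - 1) + (1 - x) / (s - 1) * ((s - 1) * Rpower (Qf x) (s - 1 - 1) * (-1 / (2 * x ^ 2)))).
exact D.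
rewrite (rp_split (Qf x) (s-1)) by (apply Qf_pos; exact Hx).
replace (s-1-1) with (s-2) by ring. unfold Qf. field. split; lra.
Qed.

Lemma df1 s x : s <> 1 -> 0 < x -> is_derive (f1 s) x (f2 s x).
Proof.
intros Ht Hx. unfold f1, f2.
assert (H : is_derive (fun y => -(Qf y)/(s-1) - (1-y)/(2*y^2)) x (1/(2*(s-1)*x^2) - (x-2)/(2*x^3))).
{ unfold Qf. ad. }
pose proof (dmul _ _ _ _ x (dpow Qf _ (s-2) x (Qf_pos x Hx) (dQf x Hx)) H) as D.
replace (Rpower (Qf x) (s - 3) * (((4 - s) * x + s) / (4 * x ^ 4))) with
  ((s - 2) * Rpower (Qf x) (s - 2 - 1) * (-1 / (2 * x ^ 2)) * (- Qf x / (s - 1) - (1 - x) / (2 * x ^ 2)) +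
       Rpower (Qf x) (s - 2) * (1 / (2 * (s - 1) * x ^ 2) - (x - 2) / (2 * x ^ 3))).
exact D.
rewrite (rp_split (Qf x) (s-2)) by (apply Qf_pos; exact Hx).
replace (s-2-1) with (s-3) by ring. unfold Qf. field. split; lra.
Qed.

Definition K s t x := / Rpower x (s+1) * Rpower ((x+1)/2) (s-t) * (((4-s)*x+s)/(t*x+4-t)).

Lemma Rpower_pos a c : 0 < Rpower a c. Proof. unfold Rpower. apply exp_pos. Qed.

Lemma f2_eq s t x : 0 < x -> 2 <= t <= 4 -> f2 s x = K s t x * g2 t x.
Proof.
intros Hx Ht. unfold f2, K, g2.
assert (HP := P_pos x Hx).
assert (E1 : Qf x = P x * / x) by (unfold Qf, P; field; lra).
rewrite E1, <- Rpower_mult_distr by first [exact HP | apply Rinv_0_lt_compat; lra].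
assert (E2 : Rpower ((x + 1) / 2) (s - t) * Rpower (P x) (t-3) = Rpower (P x) (s-3)).
{ fold (P x). rewrite <- Rpower_plus. f_equal. ring. }
assert (E3 : Rpower x (s+1) = Rpower x (s-3) * x^4).
{ replace (s+1) with ((s-3) + INR 4) by (simpl; ring). rewrite Rpower_plus, Rpower_pow by lra. reflexivity. }
assert (E4 : Rpower (/ x) (s-3) = / Rpower x (s-3)).
{ unfold Rpower. rewrite ln_Rinv by lra. rewrite <- exp_Ropp. f_equal. ring. }
rewrite E3, E4.
assert (Hc := Rpower_pos x (s-3)).
assert (Htx : 0 < t*x+4-t) by nra.
transitivity (/ (Rpower x (s - 3) * x ^ 4) * (Rpower ((x + 1) / 2) (s - t) * Rpower (P x) (t-3)) *
  (((4 - s) * x + s) / (t * x + 4 - t)) * ((t * x + 4 - t) / 4)).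
2: ring.
rewrite E2. field. repeat split; try lra.
Qed.

Lemma exp_le a b : a <= b -> exp a <= exp b.
Proof. intros H. destruct (Rle_lt_or_eq_dec a b H) as [h|h]. left; apply exp_increasing; auto. rewrite h; lra. Qed.

Lemma K_decr s t x y : 2 <= s <= 4 -> 2 <= t <= 4 -> 0 < x -> x <= y -> K s t y <= K s t x.
Proof.
intros Hs Ht Hx Hxy. unfold K.
assert (Hy : 0 < y) by lra.
assert (Ex : forall z, 0 < z -> / Rpower z (s+1) * Rpower ((z+1)/2) (s-t) = exp (-(s+1) * ln z + (s-t) * ln ((z+1)/2))).
{ intros z Hz. unfold Rpower. rewrite <- exp_Ropp, <- exp_plus. f_equal. ring. }
rewrite (Ex x Hx), (Ex y Hy).
assert (Hl : ln x <= ln y) by (apply ln_le; lra).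
assert (HlP : ln ((x+1)/2) <= ln ((y+1)/2)) by (apply ln_le; lra).
assert (Hexp : exp (-(s+1) * ln y + (s-t) * ln ((y+1)/2)) <= exp (-(s+1) * ln x + (s-t) * ln ((x+1)/2))).
{ apply exp_le. destruct (Rle_dec t s) as [hts|hts].
  - assert (HQ : ln ((y+1)/(2*y)) <= ln ((x+1)/(2*x))).
    { apply ln_le. apply Rdiv_lt_0_compat; lra.
      apply (Rmult_le_reg_r (2*x*y)). nra.
      replace ((y + 1) / (2 * y) * (2 * x * y)) with ((y+1)*x) by (field; lra).
      replace ((x + 1) / (2 * x) * (2 * x * y)) with ((x+1)*y) by (field; lra). nra. }
    assert (Ez : forall z, 0 < z -> ln ((z+1)/(2*z)) = ln ((z+1)/2) - ln z).
    { intros z Hz. replace ((z+1)/(2*z)) with ((z+1)/2 * / z) by (field; lra).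
      rewrite ln_mult, ln_Rinv by (try apply Rinv_0_lt_compat; lra). ring. }
    rewrite (Ez x Hx), (Ez y Hy) in HQ.
    assert (0 <= (s-t) * ((ln ((x+1)/2) - ln x) - (ln ((y+1)/2) - ln y))) by (apply Rmult_le_pos; lra).
    nra.
  - nra. }
assert (Hr : ((4 - s) * y + s) / (t * y + 4 - t) <= ((4 - s) * x + s) / (t * x + 4 - t)).
{ assert (0 < t*x+4-t) by nra. assert (0 < t*y+4-t) by nra.
  apply (Rmult_le_reg_r ((t*x+4-t)*(t*y+4-t))). nra.
  replace (((4 - s) * y + s) / (t * y + 4 - t) * ((t * x + 4 - t) * (t * y + 4 - t))) with (((4 - s) * y + s) * (t * x + 4 - t)) by (field; lra).
  replace (((4 - s) * x + s) / (t * x + 4 - t) * ((t * x + 4 - t) * (t * y + 4 - t))) with (((4 - s) * x + s) * (t * y + 4 - t)) by (field; lra).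
  nra. }
assert (0 <= ((4 - s) * y + s) / (t * y + 4 - t)).
{ apply Rlt_le, Rdiv_lt_0_compat; nra. }
assert (0 < exp (-(s+1) * ln y + (s-t) * ln ((y+1)/2))) by apply exp_pos.
apply Rmult_le_compat; lra.
Qed.
Lemma der_cont F y l : is_derive F y l -> continuity_pt F y.
Proof. intros H. apply continuity_pt_filterlim. apply (ex_derive_continuous F y). exists l; exact H. Qed.

Lemma mvt_between F dF u v : (forall y, Rmin u v <= y <= Rmax u v -> is_derive F y (dF y)) ->
  exists c, Rmin u v <= c <= Rmax u v /\ F v - F u = dF c * (v - u).
Proof.
intros H. apply MVT_gen.
- intros y Hy. apply H. lra.
- intros y Hy. apply (der_cont F y (dF y)). apply H. exact Hy.
Qed.

Lemma tangent (F F1 F2 : R -> R) a b :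
  (forall y, a<=y<=b -> is_derive F y (F1 y)) ->
  (forall y, a<=y<=b -> is_derive F1 y (F2 y)) ->
  (forall y, a<=y<=b -> 0 <= F2 y) -> a <= 1 <= b ->
  forall x, a <= x <= b -> F 1 + F1 1 * (x-1) <= F x.
Proof.
intros H1 H2 H3 Hab x Hx.
assert (Hmm : forall u v y, a <= u <= b -> a <= v <= b -> Rmin u v <= y <= Rmax u v -> a <= y <= b).
{ intros u v y Hu Hv Hy. unfold Rmin, Rmax in Hy. destruct (Rle_dec u v); lra. }
destruct (mvt_between (fun y => F y - F1 1 * y) (fun y => F1 y - F1 1) 1 x) as [c [Hc Ec]].
{ intros y Hy. assert (Hy' : a <= y <= b) by (apply (Hmm 1 x); auto; lra).
  assert (L : is_derive (fun y => F1 1 * y) y (F1 1)) by (auto_derive; auto; ring).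
  pose proof (is_derive_minus F (fun y => F1 1 * y) y (F1 y) (F1 1) (H1 y Hy') L) as D.
  exact D. }
assert (Hc' : a <= c <= b) by (apply (Hmm 1 x); auto; lra).
destruct (mvt_between F1 F2 1 c) as [d [Hd Ed]].
{ intros y Hy. apply H2. apply (Hmm 1 c); auto; lra. }
assert (Hd' : a <= d <= b) by (apply (Hmm 1 c); auto; lra).
assert (HF2 := H3 d Hd').
assert (Hsg : 0 <= (c - 1) * (x - 1)).
{ unfold Rmin, Rmax in Hc. destruct (Rle_dec 1 x); nra. }
assert (0 <= (F1 c - F1 1) * (x - 1)).
{ rewrite Ed. replace (F2 d * (c - 1) * (x - 1)) with (F2 d * ((c-1)*(x-1))) by ring.
  apply Rmult_le_pos; auto. }
lra.
Qed.

Lemma fsum_ext n f g : (forall i, (i < n)%nat -> f i = g i) -> fsum n f = fsum n g.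
Proof. induction n; intros H; simpl. reflexivity. rewrite IHn, H; auto. Qed.
Lemma fsum_le n f g : (forall i, (i < n)%nat -> f i <= g i) -> fsum n f <= fsum n g.
Proof. induction n; intros H; simpl. lra. apply Rplus_le_compat; auto. Qed.
Lemma fsum_scal n c f : fsum n (fun i => c * f i) = c * fsum n f.
Proof. induction n; simpl. ring. rewrite IHn. ring. Qed.
Lemma fsum_minus n f g : fsum n (fun i => f i - g i) = fsum n f - fsum n g.
Proof. induction n; simpl. ring. rewrite IHn. ring. Qed.

Lemma sum_bound n (q x F : nat -> R) c :
  (forall i, (i < n)%nat -> 0 < q i) ->
  (forall i, (i < n)%nat -> c * (x i - 1) <= F i) ->
  fsum n (fun i => q i * (x i - 1)) = 0 -> 0 <= fsum n (fun i => q i * F i).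
Proof.
intros Hq HF Hs.
apply Rle_trans with (fsum n (fun i => c * (q i * (x i - 1)))).
- rewrite fsum_scal, Hs. lra.
- apply fsum_le. intros i Hi. specialize (HF i Hi). specialize (Hq i Hi).
  replace (c * (q i * (x i - 1))) with (q i * (c * (x i - 1))) by ring.
  apply Rmult_le_compat_l; lra.
Qed.

Lemma g2_nonneg t y : 2 <= t <= 4 -> 0 < y -> 0 <= g2 t y.
Proof. intros Ht Hy. unfold g2. apply Rmult_le_pos. apply Rlt_le, Rpower_pos. nra. Qed.

Theorem theorem4p1 (n : nat) (p q : nat -> R) (r R0 s t : R) :
  (2 <= n)%nat ->
  Gamma n p -> Gamma n q ->
  0 < r -> r <= R0 ->
  (forall i, (i < n)%nat -> r <= p i / q i <= R0) ->
  2 <= s <= 4 -> 2 <= t <= 4 ->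
  / Rpower R0 (s + 1) * Rpower ((R0 + 1) / 2) (s - t)
    * (((4 - s) * R0 + s) / (t * R0 + 4 - t)) * zeta n t p q
  <= zeta n s q p
  /\
  zeta n s q p
  <= / Rpower r (s + 1) * Rpower ((r + 1) / 2) (s - t)
    * (((4 - s) * r + s) / (t * r + 4 - t)) * zeta n t p q.
Proof.
intros Hn [Hp Sp] [Hq Sq] Hr HrR Hx Hs Ht.
change (K s t R0 * zeta n t p q <= zeta n s q p /\ zeta n s q p <= K s t r * zeta n t p q).
set (x := fun i => p i / q i).
assert (Zs : zeta n s q p = fsum n (fun i => q i * ffun s (x i))).
{ unfold zeta. destruct (Req_EM_T s 1) as [e|e]. lra.
  rewrite <- fsum_scal. apply fsum_ext. intros i Hi.
  assert (hp := Hp i Hi). assert (hq := Hq i Hi).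
  unfold ffun, x. replace (Qf (p i / q i)) with ((q i + p i) / (2 * p i)).
  field. split; lra. unfold Qf. field. split; lra. }
assert (Zt : zeta n t p q = fsum n (fun i => q i * gfun t (x i))).
{ unfold zeta. destruct (Req_EM_T t 1) as [e|e]. lra.
  rewrite <- fsum_scal. apply fsum_ext. intros i Hi.
  assert (hp := Hp i Hi). assert (hq := Hq i Hi).
  unfold gfun, x. replace (P (p i / q i)) with ((p i + q i) / (2 * q i)).
  field. split; lra. unfold P. field. lra. }
assert (Sx : fsum n (fun i => q i * (x i - 1)) = 0).
{ rewrite (fsum_ext n _ (fun i => p i - q i)). rewrite fsum_minus; lra.
  intros i Hi. unfold x. assert (hq := Hq i Hi). field. lra. }
assert (Hxi : forall i, (i < n)%nat -> r <= x i <= R0) by (intros; apply Hx; auto).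
assert (H1 : r <= 1 <= R0).
{ split.
  - apply Rle_trans with (fsum n (fun i => r * q i)).
    + rewrite fsum_scal, Sq. lra.
    + rewrite <- Sp. apply fsum_le. intros i Hi. assert (hq := Hq i Hi).
      specialize (Hxi i Hi). unfold x in Hxi. destruct Hxi as [h _].
      apply (Rmult_le_compat_r (q i)) in h; try lra. unfold Rdiv in h.
      rewrite Rmult_assoc, Rinv_l, Rmult_1_r in h; lra.
  - apply Rle_trans with (fsum n (fun i => R0 * q i)).
    + rewrite <- Sp at 1. apply fsum_le. intros i Hi. assert (hq := Hq i Hi).
      specialize (Hxi i Hi). unfold x in Hxi. destruct Hxi as [_ h].
      apply (Rmult_le_compat_r (q i)) in h; try lra. unfold Rdiv in h.
      rewrite Rmult_assoc, Rinv_l, Rmult_1_r in h; lra.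
    + rewrite fsum_scal, Sq. lra. }
assert (Hs1 : s <> 1) by lra. assert (Ht1 : t <> 1) by lra.
assert (F0 : ffun s 1 = 0) by (unfold ffun; unfold Rdiv; ring).
assert (G0 : gfun t 1 = 0) by (unfold gfun; unfold Rdiv; ring).
split.
- set (m := K s t R0).
  assert (T := tangent (fun y => ffun s y - m * gfun t y) (fun y => f1 s y - m * g1 t y)
                 (fun y => f2 s y - m * g2 t y) r R0).
  assert (0 <= fsum n (fun i => q i * (ffun s (x i) - m * gfun t (x i)))).
  { apply (sum_bound n q x _ (f1 s 1 - m * g1 t 1)); auto.
    intros i Hi. specialize (Hxi i Hi).
    assert (Tt := T); simpl in Tt. rewrite F0, G0 in Tt.
    replace ((f1 s 1 - m * g1 t 1) * (x i - 1)) with (0 - m*0 + (f1 s 1 - m * g1 t 1) * (x i - 1)) by ring.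
    apply Tt; auto.
    + intros y Hy. apply (is_derive_minus (ffun s) (fun z => m * gfun t z)). apply df; lra.
      apply (is_derive_scal (gfun t) y m). apply dg; lra.
    + intros y Hy. apply (is_derive_minus (f1 s) (fun z => m * g1 t z)). apply df1; lra.
      apply (is_derive_scal (g1 t) y m). apply dg1; lra.
    + intros y Hy. rewrite (f2_eq s t y) by lra.
      assert (K s t R0 <= K s t y) by (apply K_decr; lra).
      assert (0 <= g2 t y) by (apply g2_nonneg; lra). unfold m. nra. }
  rewrite Zs, Zt. rewrite <- fsum_scal.
  rewrite (fsum_ext n (fun i => q i * (ffun s (x i) - m * gfun t (x i)))
            (fun i => q i * ffun s (x i) - m * (q i * gfun t (x i)))) in H by (intros; ring).
  rewrite fsum_minus in H. lra.
- set (m := K s t r).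
  assert (T := tangent (fun y => m * gfun t y - ffun s y) (fun y => m * g1 t y - f1 s y)
                 (fun y => m * g2 t y - f2 s y) r R0).
  assert (0 <= fsum n (fun i => q i * (m * gfun t (x i) - ffun s (x i)))).
  { apply (sum_bound n q x _ (m * g1 t 1 - f1 s 1)); auto.
    intros i Hi. specialize (Hxi i Hi).
    assert (Tt := T); simpl in Tt. rewrite F0, G0 in Tt.
    replace ((m * g1 t 1 - f1 s 1) * (x i - 1)) with (m*0 - 0 + (m * g1 t 1 - f1 s 1) * (x i - 1)) by ring.
    apply Tt; auto.
    + intros y Hy. apply (is_derive_minus (fun z => m * gfun t z) (ffun s)).
      apply (is_derive_scal (gfun t) y m). apply dg; lra. apply df; lra.
    + intros y Hy. apply (is_derive_minus (fun z => m * g1 t z) (f1 s)).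
      apply (is_derive_scal (g1 t) y m). apply dg1; lra. apply df1; lra.
    + intros y Hy. rewrite (f2_eq s t y) by lra.
      assert (K s t y <= K s t r) by (apply K_decr; lra).
      assert (0 <= g2 t y) by (apply g2_nonneg; lra). unfold m. nra. }
  rewrite Zs, Zt. rewrite <- fsum_scal.
  rewrite (fsum_ext n (fun i => q i * (m * gfun t (x i) - ffun s (x i)))
            (fun i => m * (q i * gfun t (x i)) - q i * ffun s (x i))) in H by (intros; ring).
  rewrite fsum_minus in H. lra.
Qed.
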